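(* Let $N\ge1$, $M=N$, and let $w_{mn}=N^{-1/2}\exp(-2\pi j\,mn/N)$ for $0\le m,n<N$ (the unitary discrete Fourier kernel, corresponding to infinite propagation distance). Suppose the targets are attainable: there exists $\boldsymbol C\in(\mathbb{C}\setminus\{0\})^N$ with $|i_m|^2=|p_m(\boldsymbol C)|^2$ for all $m$. Then for every $\boldsymbol c\in(\mathbb{C}\setminus\{0\})^N$ (in particular every iterate $\boldsymbol c[\tau]$ of the Wirtinger flow, regardless of the initial value) and every $n$, $$\Big|\frac{\partial L}{\partial\bar c_n}(\boldsymbol c)\Big|\le\frac{1}{|c_n|}.$$
   Context: Setup (WFCF). $j$ denotes the imaginary unit. For $\boldsymbol c=(c_0,\dots,c_{N-1})\in(\mathbb{C}\setminus\{0\})^N$ define $h_n(c_n)=c_n/|c_n|$, $p_m(\boldsymbol c)=\sum_{n=0}^{N-1}w_{mn}h_n(c_n)$, and the loss $L(\boldsymbol c)=\frac{1}{8N^2}\sum_{m=0}^{M-1}\big(|p_m(\boldsymbol c)|^2-|i_m|^2\big)^2$, where $|i_m|^2\ge0$ are given target values. Writing $c_n=a_n+jb_n$ with $a_n,b_n$ real, the Wirtinger derivative of a (real- or complex-valued) function $f$ with respect to $\bar c_n$ is $\frac{\partial f}{\partial \bar c_n}=\frac12\big(\frac{\partial f}{\partial a_n}+j\frac{\partial f}{\partial b_n}\big)$. The Wirtinger flow iteration is $c_n[\tau+1]=c_n[\tau]-\alpha\frac{\partial L}{\partial\bar c_n}(\boldsymbol c[\tau])$ with a real learning rate $\alpha>0$.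 *)

(* Defs.v *)
From Stdlib Require Import Reals.
From Coquelicot Require Import Coquelicot.
Open Scope R_scope.

Fixpoint csum (n : nat) (f : nat -> C) : C :=
  match n with O => RtoC 0 | S k => Cplus (csum k f) (f k) end.
Fixpoint rsum (n : nat) (f : nat -> R) : R :=
  match n with O => 0 | S k => rsum k f + f k end.

Definition jC : C := (0, 1).

Definition hph (c : C) : C := Cmult (RtoC (/ Cmod c)) c.

Definition pm (N : nat) (w : nat -> nat -> C) (c : nat -> C) (m : nat) : C :=
  csum N (fun n => Cmult (w m n) (hph (c n))).

(* L(c) = 1/(8 N^2) sum_{m<M} (|p_m(c)|^2 - |i_m|^2)^2, with i2 m = |i_m|^2 *)
Definition Loss (N M : nat) (w : nat -> nat -> C) (i2 : nat -> R)
  (c : nat -> C) : R :=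
  / (8 * (INR N) ^ 2) * rsum M (fun m => (Cmod (pm N w c m) ^ 2 - i2 m) ^ 2).

Definition dft (N : nat) (m n : nat) : C :=
  Cmult (RtoC (/ sqrt (INR N)))
    (cos (2 * PI * INR m * INR n / INR N),
     - sin (2 * PI * INR m * INR n / INR N)).

Definition upd (c : nat -> C) (n : nat) (z : C) : nat -> C :=
  fun k => if Nat.eqb k n then z else c k.

(* Wirtinger derivative w.r.t. conj(c_n) of a real-valued f, c_n = a_n + j b_n:
   (1/2) (df/da_n + j df/db_n) *)
Definition wirtinger (f : (nat -> C) -> R) (c : nat -> C) (n : nat) : C :=
  let da := Derive (fun t => f (upd c n (Cplus (c n) (RtoC t)))) 0 in
  let db := Derive (fun t => f (upd c n (Cplus (c n) (Cmult jC (RtoC t))))) 0 in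
  Cmult (RtoC (/ 2)) (Cplus (RtoC da) (Cmult jC (RtoC db))).

(* Main.v *)
Require Import Defs.
From Stdlib Require Import Reals Lra Lia Psatz.
From Coquelicot Require Import Coquelicot.
Open Scope R_scope.

Ltac ceq := apply injective_projections; simpl; try unfold jC; simpl; ring.

Lemma csum_ext K f g : (forall k, (k < K)%nat -> f k = g k) -> csum K f = csum K g.
Proof. induction K; intros H; simpl; auto. rewrite IHK by (intros; apply H; lia). rewrite H by lia. reflexivity. Qed.

Lemma rsum_le K f g : (forall k, (k < K)%nat -> f k <= g k) -> rsum K f <= rsum K g.
Proof. induction K; intros H; simpl. lra. assert (H1 := H K (Nat.lt_succ_diag_r K)).
 assert (rsum K f <= rsum K g) by (apply IHK; intros; apply H; lia). lra. Qed.

Lemma rsum_const K x : rsum K (fun _ => x) = INR K * x.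
Proof. induction K. simpl. ring. rewrite S_INR. simpl. rewrite IHK. ring. Qed.

Lemma Cmod_csum K f : Cmod (csum K f) <= rsum K (fun k => Cmod (f k)).
Proof. induction K; simpl. rewrite Cmod_0. lra.
 eapply Rle_trans. apply Cmod_triangle. lra. Qed.

Lemma rsum_pair K f g : (rsum K f, rsum K g) = csum K (fun k => (f k, g k)).
Proof. induction K; simpl. reflexivity. rewrite <- IHK. reflexivity. Qed.

Lemma Cmod_hph x : x <> RtoC 0 -> Cmod (hph x) = 1.
Proof. intros H. unfold hph. rewrite Cmod_mult, Cmod_R.
 assert (0 < Cmod x) by (apply Cmod_gt_0; exact H).
 rewrite Rabs_pos_eq by (left; apply Rinv_0_lt_compat; lra). field. lra. Qed.

Lemma Cmod_dft N m k : (1 <= N)%nat -> Cmod (dft N m k) = / sqrt (INR N).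
Proof. intros HN. unfold dft. rewrite Cmod_mult, Cmod_R.
 assert (0 < INR N) by (apply lt_0_INR; lia).
 assert (0 < sqrt (INR N)) by (apply sqrt_lt_R0; lra).
 rewrite Rabs_pos_eq by (left; apply Rinv_0_lt_compat; lra).
 unfold Cmod; simpl.
 set (x := 2 * PI * INR m * INR k / INR N).
 replace (cos x * (cos x * 1) + - sin x * (- sin x * 1)) with 1 by (assert (Hs := sin2_cos2 x); unfold Rsqr in Hs; nra).
 rewrite sqrt_1. ring. Qed.

Lemma pm_bound N c m : (1 <= N)%nat -> (forall k, (k < N)%nat -> c k <> RtoC 0) ->
  Cmod (pm N (dft N) c m) <= sqrt (INR N).
Proof. intros HN Hc. unfold pm. eapply Rle_trans. apply Cmod_csum.
 assert (0 < INR N) by (apply lt_0_INR; lia).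
 assert (0 < sqrt (INR N)) by (apply sqrt_lt_R0; lra).
 eapply Rle_trans. apply (rsum_le _ _ (fun _ => / sqrt (INR N))).
 intros k Hk. rewrite Cmod_mult, Cmod_dft, Cmod_hph by auto. lra.
 rewrite rsum_const. rewrite <- (sqrt_sqrt (INR N)) at 1 by lra. right. field. lra. Qed.

Lemma pm_upd_gen N (w : nat -> nat -> C) (c : nat -> C) n z m :
  csum N (fun k => Cmult (w m k) (hph (upd c n z k))) =
  Cplus (csum N (fun k => if Nat.eqb k n then RtoC 0 else Cmult (w m k) (hph (c k))))
        (if Nat.ltb n N then Cmult (w m n) (hph z) else RtoC 0).
Proof. induction N; simpl. ceq. rewrite IHN. unfold upd.
 destruct (Nat.eqb_spec N n); destruct (Nat.ltb_spec n N); destruct (Nat.ltb_spec n (S N)); try lia.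
 subst. ceq. ceq. ceq. Qed.

Definition Sm N (w : nat -> nat -> C) (c : nat -> C) n m := csum N (fun k => if Nat.eqb k n then RtoC 0 else Cmult (w m k) (hph (c k))).

Lemma pm_upd N (w : nat -> nat -> C) (c : nat -> C) n z m : (n < N)%nat ->
  pm N w (upd c n z) m = Cplus (Sm N w c n m) (Cmult (w m n) (hph z)).
Proof. intros H. unfold pm, Sm. rewrite pm_upd_gen. destruct (Nat.ltb_spec n N); [reflexivity|lia]. Qed.

Lemma pm_self N (w : nat -> nat -> C) (c : nat -> C) n m : (n < N)%nat ->
  pm N w c m = Cplus (Sm N w c n m) (Cmult (w m n) (hph (c n))).
Proof. intros H. rewrite <- pm_upd by auto. unfold pm. apply csum_ext. intros k _. unfold upd.
 destruct (Nat.eqb_spec k n); subst; reflexivity. Qed.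

Lemma is_derive_eq (f : R -> R) x l l' : is_derive f x l -> l = l' -> is_derive f x l'.
Proof. intros H ->; exact H. Qed.

Lemma is_derive_rsum M (F : nat -> R -> R) (F' : nat -> R) x :
  (forall m, (m < M)%nat -> is_derive (F m) x (F' m)) ->
  is_derive (fun t => rsum M (fun m => F m t)) x (rsum M F').
Proof. induction M; intros H; simpl.
 - apply is_derive_Reals, derivable_pt_lim_const.
 - apply (is_derive_plus (fun t => rsum M (fun m => F m t)) (F M)).
   apply IHM; intros; apply H; lia. apply H; lia. Qed.

Lemma deriv_poly (h1 h2 : R -> R) S1 S2 w1 w2 i H1 H2 : is_derive h1 0 H1 -> is_derive h2 0 H2 ->
 is_derive (fun t => ((S1 + (w1*h1 t - w2*h2 t))^2 + (S2 + (w1*h2 t + w2*h1 t))^2 - i)^2) 0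
  (2*(((S1 + (w1*h1 0 - w2*h2 0))^2 + (S2 + (w1*h2 0 + w2*h1 0))^2 - i)) * (2*((S1 + (w1*h1 0 - w2*h2 0))*(w1*H1-w2*H2) + (S2 + (w1*h2 0 + w2*h1 0))*(w1*H2+w2*H1)))).
Proof. intros H H0. auto_derive.
repeat split; eexists; eassumption.
replace (Derive (fun x => h1 x) 0) with H1 by (symmetry; apply is_derive_unique; exact H).
replace (Derive (fun x => h2 x) 0) with H2 by (symmetry; apply is_derive_unique; exact H0).
ring.
Qed.

Definition Hd1 a b d1 d2 := d1 / sqrt (a*a+b*b) - a * (a*d1+b*d2) / (sqrt (a*a+b*b))^3.
Definition Hd2 a b d1 d2 := d2 / sqrt (a*a+b*b) - b * (a*d1+b*d2) / (sqrt (a*a+b*b))^3.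

Lemma deriv_h1 a b d1 d2 : 0 < a*a+b*b ->
  is_derive (fun t => fst (hph (a + t*d1, b + t*d2))) 0 (Hd1 a b d1 d2).
Proof. intros Hp. apply (is_derive_ext (fun t => (a + t*d1) / sqrt ((a+t*d1)^2 + (b+t*d2)^2))).
 intros t. unfold hph, Cmod; simpl. unfold Rdiv. ring.
 unfold Hd1. auto_derive.
 replace ((a + 0 * d1) * ((a + 0 * d1) * 1) + (b + 0 * d2) * ((b + 0 * d2) * 1)) with (a*a+b*b) by ring.
 split; [lra|split; [apply Rgt_not_eq, sqrt_lt_R0; lra|exact I]].
 replace ((a + 0 * d1) * ((a + 0 * d1) * 1) + (b + 0 * d2) * ((b + 0 * d2) * 1)) with (a*a+b*b) by ring.
 assert (0 < sqrt (a*a+b*b)) by (apply sqrt_lt_R0; lra).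
 field. lra. Qed.

Lemma deriv_h2 a b d1 d2 : 0 < a*a+b*b ->
  is_derive (fun t => snd (hph (a + t*d1, b + t*d2))) 0 (Hd2 a b d1 d2).
Proof. intros Hp. apply (is_derive_ext (fun t => (b + t*d2) / sqrt ((a+t*d1)^2 + (b+t*d2)^2))).
 intros t. unfold hph, Cmod; simpl. unfold Rdiv. ring.
 unfold Hd2. auto_derive.
 replace ((a + 0 * d1) * ((a + 0 * d1) * 1) + (b + 0 * d2) * ((b + 0 * d2) * 1)) with (a*a+b*b) by ring.
 split; [lra|split; [apply Rgt_not_eq, sqrt_lt_R0; lra|exact I]].
 replace ((a + 0 * d1) * ((a + 0 * d1) * 1) + (b + 0 * d2) * ((b + 0 * d2) * 1)) with (a*a+b*b) by ring.
 assert (0 < sqrt (a*a+b*b)) by (apply sqrt_lt_R0; lra).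
 field. lra. Qed.

Definition Lm N (w : nat -> nat -> C) (c : nat -> C) n a b d1 d2 m :=
  fst (pm N w c m) * (fst (w m n) * Hd1 a b d1 d2 - snd (w m n) * Hd2 a b d1 d2) +
  snd (pm N w c m) * (fst (w m n) * Hd2 a b d1 d2 + snd (w m n) * Hd1 a b d1 d2).

Definition DL N w i2 c n a b d1 d2 :=
  / (8 * (INR N) ^ 2) * rsum N (fun m => 4 * (Cmod (pm N w c m) ^ 2 - i2 m) * Lm N w c n a b d1 d2 m).

Lemma deriv_loss N w i2 c n a b d1 d2 : (n < N)%nat -> c n = (a, b) -> 0 < a*a+b*b ->
  is_derive (fun t => Loss N N w i2 (upd c n (a + t*d1, b + t*d2))) 0 (DL N w i2 c n a b d1 d2).
Proof. intros Hn Hz Hp. unfold Loss, DL. apply is_derive_scal.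
 apply (is_derive_rsum N (fun m t => (Cmod (pm N w (upd c n (a + t*d1, b + t*d2)) m) ^ 2 - i2 m) ^ 2)).
 intros m Hm.
 eapply is_derive_ext. 2: eapply is_derive_eq.
 2: apply (deriv_poly (fun t => fst (hph (a + t*d1, b + t*d2))) (fun t => snd (hph (a + t*d1, b + t*d2)))
    (fst (Sm N w c n m)) (snd (Sm N w c n m)) (fst (w m n)) (snd (w m n)) (i2 m) _ _ (deriv_h1 a b d1 d2 Hp) (deriv_h2 a b d1 d2 Hp)).
 - intros t. cbv beta. rewrite pm_upd by auto. rewrite Cmod2_alt. unfold Re, Im, Cplus, Cmult. cbn [fst snd]. reflexivity.
 - unfold Lm. rewrite (pm_self N w c n m Hn). rewrite Hz, Cmod2_alt. unfold Re, Im, Cplus, Cmult. cbn [fst snd].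
   replace (a + 0*d1) with a by ring. replace (b + 0*d2) with b by ring. match goal with |- ?x = ?y => change (@eq R x y) end; ring.
Qed.

Lemma keyineq N w c n a b m : 0 < a*a+b*b ->
  Cmod (Lm N w c n a b 1 0 m, Lm N w c n a b 0 1 m) <=
  Cmod (pm N w c m) * Cmod (w m n) / sqrt (a*a+b*b).
Proof. intros Hp.
 assert (Hr : sqrt (a*a+b*b) * sqrt (a*a+b*b) = a*a+b*b) by (apply sqrt_sqrt; lra).
 assert (rpos : 0 < sqrt (a*a+b*b)) by (apply sqrt_lt_R0; lra).
 unfold Lm. unfold Hd1, Hd2. set (r := sqrt (a*a+b*b)) in *.
 assert (E11 : 1 / r - a * (a * 1 + b * 0) / r ^ 3 = b*b/r^3).
 { replace (r^3) with (r*(a*a+b*b)) by (rewrite <- Hr; ring). field. lra. }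
 assert (E21 : 0 / r - b * (a * 1 + b * 0) / r ^ 3 = -a*b/r^3) by (field; lra).
 assert (E12 : 0 / r - a * (a * 0 + b * 1) / r ^ 3 = -a*b/r^3) by (field; lra).
 assert (E22 : 1 / r - b * (a * 0 + b * 1) / r ^ 3 = a*a/r^3).
 { replace (r^3) with (r*(a*a+b*b)) by (rewrite <- Hr; ring). field. lra. }
 rewrite E11, E21, E12, E22.
 destruct (pm N w c m) as [p1 p2]. destruct (w m n) as [w1 w2].
 unfold Cmod. cbn [fst snd].
 rewrite <- sqrt_mult by nra.
 match goal with |- _ <= ?RR => replace RR with (sqrt ((p1 ^ 2 + p2 ^ 2) * (w1 ^ 2 + w2 ^ 2) / (r*r))) end.
 2: rewrite sqrt_div_alt by nra; rewrite sqrt_square by lra; reflexivity.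
 apply sqrt_le_1. apply Rplus_le_le_0_compat; apply pow2_ge_0. unfold Rdiv; apply Rmult_le_pos. apply Rmult_le_pos; apply Rplus_le_le_0_compat; apply pow2_ge_0. left; apply Rinv_0_lt_compat; nra.
 set (q1 := p1*w1+p2*w2). set (q2 := p1*w2 - p2*w1). set (X := q1*b + q2*a).
 replace ((p1 * (w1 * (b * b / r ^ 3) - w2 * (- a * b / r ^ 3)) +
   p2 * (w1 * (- a * b / r ^ 3) + w2 * (b * b / r ^ 3))) ^ 2 +
  (p1 * (w1 * (- a * b / r ^ 3) - w2 * (a * a / r ^ 3)) +
   p2 * (w1 * (a * a / r ^ 3) + w2 * (- a * b / r ^ 3))) ^ 2)
  with (X^2 * (a*a+b*b) / r^6) by (unfold X, q1, q2; field; lra).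
 replace ((p1 ^ 2 + p2 ^ 2) * (w1 ^ 2 + w2 ^ 2) / (r * r))
  with ((q1^2+q2^2)*(a*a+b*b)*(a*a+b*b)/r^6) by (rewrite <- Hr; unfold q1, q2; field; lra).
 unfold Rdiv. apply Rmult_le_compat_r. left; apply Rinv_0_lt_compat; apply pow_lt; lra.
 apply Rmult_le_compat_r. lra.
 assert ((q1^2+q2^2)*(a*a+b*b) - X^2 = (q1*a - q2*b)^2) by (unfold X; ring).
 assert (X^2 <= (q1^2+q2^2)*(a*a+b*b)) by (pose proof (pow2_ge_0 (q1*a - q2*b)); lra).
 nra.
Qed.

Lemma Cmod_scal x u v : Cmod (x * u, x * v) = Rabs x * Cmod (u, v).
Proof. replace (x*u, x*v) with (Cmult (RtoC x) (u, v)) by ceq. rewrite Cmod_mult, Cmod_R. reflexivity. Qed.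

Lemma sq_bound N (p : C) : 1 <= INR N -> Cmod p <= sqrt (INR N) -> 0 <= Cmod p ^ 2 <= INR N.
Proof. intros H1 H2. pose proof (Cmod_ge_0 p). rewrite <- (sqrt_sqrt (INR N)) by lra.
 split. nra. simpl. rewrite Rmult_1_r. apply Rmult_le_compat; lra. Qed.

Theorem theorem2 (N : nat) (HN : (1 <= N)%nat) (i2 : nat -> R)
  (Hattain : exists Cv : nat -> C,
      (forall n, (n < N)%nat -> Cv n <> RtoC 0) /\
      (forall m, (m < N)%nat -> i2 m = Cmod (pm N (dft N) Cv m) ^ 2))
  (c : nat -> C) (Hc : forall n, (n < N)%nat -> c n <> RtoC 0)
  (n : nat) (Hn : (n < N)%nat) :
  Cmod (wirtinger (Loss N N (dft N) i2) c n) <= / Cmod (c n).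
Proof.
 destruct Hattain as [Cv [HCv Hi]].
 assert (Hcn := Hc n Hn). destruct (c n) as [a b] eqn:Hz.
 assert (Hp : 0 < a*a+b*b).
 { destruct (Req_dec a 0) as [->|Ha]. destruct (Req_dec b 0) as [->|Hb].
   exfalso; apply Hcn; reflexivity. nra. nra. }
 assert (HN1 : 1 <= INR N) by (apply (le_INR 1); lia).
 assert (sN : 0 < sqrt (INR N)) by (apply sqrt_lt_R0; lra).
 assert (rpos : 0 < sqrt (a*a+b*b)) by (apply sqrt_lt_R0; lra).
 replace (Cmod (a, b)) with (sqrt (a*a+b*b)) by (unfold Cmod; simpl; f_equal; ring).
 unfold wirtinger. rewrite Hz.
 rewrite (Derive_ext (fun t => Loss N N (dft N) i2 (upd c n (Cplus (a, b) (RtoC t)))) (fun t => Loss N N (dft N) i2 (upd c n (a + t*1, b + t*0))))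
   by (intros t; f_equal; f_equal; ceq).
 rewrite (Derive_ext (fun t => Loss N N (dft N) i2 (upd c n (Cplus (a, b) (Cmult jC (RtoC t)))))
   (fun t => Loss N N (dft N) i2 (upd c n (a + t*0, b + t*1))))
   by (intros t; f_equal; f_equal; ceq).
 replace (Derive (fun t => Loss N N (dft N) i2 (upd c n (a + t*1, b + t*0))) 0)
   with (DL N (dft N) i2 c n a b 1 0) by (symmetry; apply is_derive_unique, deriv_loss; auto).
 replace (Derive (fun t => Loss N N (dft N) i2 (upd c n (a + t*0, b + t*1))) 0)
   with (DL N (dft N) i2 c n a b 0 1) by (symmetry; apply is_derive_unique, deriv_loss; auto).
 rewrite Cmod_mult, Cmod_R, Rabs_pos_eq by lra.
 match goal with |- context [Cplus (RtoC ?D1) (Cmult jC (RtoC ?D2))] =>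
   replace (Cplus (RtoC D1) (Cmult jC (RtoC D2))) with ((D1, D2) : C) by ceq end.
 unfold DL. rewrite Cmod_scal.
 assert (HK : 0 < / (8 * INR N ^ 2)) by (apply Rinv_0_lt_compat; nra).
 rewrite (Rabs_pos_eq (/ (8 * INR N ^ 2))) by lra.
 rewrite rsum_pair.
 assert (Hsum : Cmod (csum N (fun k =>
     (4 * (Cmod (pm N (dft N) c k) ^ 2 - i2 k) * Lm N (dft N) c n a b 1 0 k,
      4 * (Cmod (pm N (dft N) c k) ^ 2 - i2 k) * Lm N (dft N) c n a b 0 1 k)))
   <= INR N * (4 * INR N / sqrt (a*a+b*b))).
 { eapply Rle_trans. apply Cmod_csum. rewrite <- rsum_const. apply rsum_le. intros k Hk.
   rewrite Cmod_scal, Rabs_mult, (Rabs_pos_eq 4) by lra.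
   assert (He : Rabs (Cmod (pm N (dft N) c k) ^ 2 - i2 k) <= INR N).
   { rewrite Hi by auto.
     pose proof (sq_bound N _ HN1 (pm_bound N c k HN Hc)).
     pose proof (sq_bound N _ HN1 (pm_bound N Cv k HN HCv)).
     unfold Rabs; destruct (Rcase_abs _); lra. }
   assert (HL := keyineq N (dft N) c n a b k Hp).
   rewrite Cmod_dft in HL by auto.
   assert (HL2 : Cmod (Lm N (dft N) c n a b 1 0 k, Lm N (dft N) c n a b 0 1 k) <= / sqrt (a*a+b*b)).
   { eapply Rle_trans. exact HL. pose proof (pm_bound N c k HN Hc).
     replace (/ sqrt (a*a+b*b)) with (sqrt (INR N) * / sqrt (INR N) / sqrt (a*a+b*b)) by (field; lra).
     unfold Rdiv. apply Rmult_le_compat_r. left; apply Rinv_0_lt_compat; lra.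
     apply Rmult_le_compat_r. left; apply Rinv_0_lt_compat; lra. exact H. }
   pose proof (Rabs_pos (Cmod (pm N (dft N) c k) ^ 2 - i2 k)).
   pose proof (Cmod_ge_0 (Lm N (dft N) c n a b 1 0 k, Lm N (dft N) c n a b 0 1 k)).
   unfold Rdiv. apply Rmult_le_compat; try lra. }
 apply Rle_trans with (/ 2 * (/ (8 * INR N ^ 2) * (INR N * (4 * INR N / sqrt (a*a+b*b))))).
 apply Rmult_le_compat_l. lra. apply Rmult_le_compat_l. lra. exact Hsum.
 replace (/ 2 * (/ (8 * INR N ^ 2) * (INR N * (4 * INR N / sqrt (a*a+b*b)))))
   with (/ 4 * / sqrt (a*a+b*b)) by (field; split; lra).
 pose proof (Rinv_0_lt_compat _ rpos). lra.
Qed.
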